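(* Let $k_{11}>0$, $k_{22}>0$, $\nu\in\mathbb{R}$, and let $\mathbf{D}=\begin{pmatrix} d_{11}&d_{12}\\ d_{12}&d_{22}\end{pmatrix}$ be a real symmetric positive definite matrix. Consider the system $\ddot{\mathbf{q}}+\mathbf{D}\dot{\mathbf{q}}+(\mathbf{K}+\mathbf{N})\mathbf{q}=0$, $\mathbf{q}\in\mathbb{R}^2$, with $\mathbf{K}=\mathrm{diag}(k_{11},k_{22})$ and $\mathbf{N}=\begin{pmatrix}0&\nu\\-\nu&0\end{pmatrix}$. Then all roots $\lambda$ of $\det(\lambda^2\mathbf{I}+\lambda\mathbf{D}+\mathbf{K}+\mathbf{N})=0$ have negative real parts if and only if $$\nu^2<\frac{(k_{11}-k_{22})^2}{4}-\frac{(d_{11}-d_{22})^2(k_{11}-k_{22})^2-4(k_{11}d_{22}+k_{22}d_{11})(d_{11}d_{22}-d_{12}^2)(d_{11}+d_{22})}{4(d_{11}+d_{22})^2}.$$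
   Context: $\mathbf{I}$ denotes the $2\times2$ identity matrix. *)

(* Defs.v *)
(* Complex numbers = an arbitrary numClosedFieldType C
   (e.g. algC; any model of C = R[i] with R real closed); real parameters are
   elements of C that are \is Num.real. *)
From HB Require Import structures.
From mathcomp Require Import all_boot all_order all_algebra.
Set Implicit Arguments. Unset Strict Implicit. Unset Printing Implicit Defensive.
Import Order.TTheory GRing.Theory Num.Theory.
Local Open Scope ring_scope.

Definition mx2 (C : nzRingType) (a b c d : C) : 'M[C]_2 :=
  \matrix_(i < 2, j < 2)
    if i == 0 :> nat then (if j == 0 :> nat then a else b)
    else (if j == 0 :> nat then c else d).

Definition posdef (C : numFieldType) (n : nat) (A : 'M[C]_n) : Prop :=
  forall x : 'cV[C]_n, (forall i, x i 0 \is Num.real) -> x != 0 ->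
    0 < (x^T *m A *m x) 0 0.

(* Main.v *)
Require Import Defs.
From HB Require Import structures.
From mathcomp Require Import all_boot all_order all_algebra ring.
Import Order.TTheory GRing.Theory Num.Theory.
Local Open Scope ring_scope.

Ltac realt := rewrite ?(rpredB, rpredD, rpredM, rpredN, rpredX, rpred0, rpred1, rpred_nat) //.

Section S.
Variable C : numClosedFieldType.
Implicit Types a b p q r w x y z A B : C.

Lemma lin_real_zero A B z : A \is Num.real -> B \is Num.real -> z \isn't Num.real ->
  A * z + B = 0 -> A = 0 /\ B = 0.
Proof.
move=> AR BR zR H.
have Hc : A * z^* + B = 0.
  by rewrite -(conj_Creal AR) -(conj_Creal BR) -rmorphM -rmorphD H rmorph0.
have : A * (z - z^*) = 0 by rewrite mulrBr -[A * z](addrK B) H -[A * z^*](addrK B) Hc subrr.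
move/eqP; rewrite mulf_eq0 subr_eq0 => /orP [/eqP A0|zz].
  by split=> //; move: H; rewrite A0 mul0r add0r.
by move: zR; rewrite CrealE eq_sym zz.
Qed.

Lemma conj_sum_real z : z + z^* \is Num.real.
Proof. by rewrite CrealE rmorphD /= conjCK addrC. Qed.

Lemma conj_prod_real z : z * z^* \is Num.real.
Proof. by rewrite CrealE rmorphM /= conjCK mulrC. Qed.

Lemma root2 p q : exists z, z ^+ 2 + p * z + q = 0.
Proof.
have [z Hz] := @solve_monicpoly C 2 (nth 0 [:: -q; -p]) isT.
exists z; move: Hz; rewrite !big_ord_recr big_ord0 /= add0r expr0 mulr1 expr1 => ->.
ring.
Qed.

Lemma root3 a b c : exists z, z ^+ 3 + a * z ^+ 2 + b * z + c = 0.
Proof.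
have [z Hz] := @solve_monicpoly C 3 (nth 0 [:: -c; -b; -a]) isT.
exists z; move: Hz; rewrite !big_ord_recr big_ord0 /= add0r expr0 mulr1 expr1 => ->.
ring.
Qed.

Lemma root4 a b c d : exists z, z ^+ 4 + a * z ^+ 3 + b * z ^+ 2 + c * z + d = 0.
Proof.
have [z Hz] := @solve_monicpoly C 4 (nth 0 [:: -d; -c; -b; -a]) isT.
exists z; move: Hz; rewrite !big_ord_recr big_ord0 /= add0r expr0 mulr1 expr1 => ->.
ring.
Qed.

Lemma eq_of_sub {x y e} : x - y = e -> e = 0 -> x = y.
Proof. by move=> H e0; apply/eqP; rewrite -subr_eq0 H e0. Qed.

Lemma conj_pair z : z \isn't Num.real -> exists s t, [/\ s \is Num.real, t \is Num.real,
   z ^+ 2 - s * z + t = 0 & True].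
Proof.
move=> _; exists (z + z^*), (z * z^*); split=> //; [exact: conj_sum_real|exact: conj_prod_real|ring].
Qed.

Lemma fact3 b2 b1 b0 : b2 \is Num.real -> b1 \is Num.real -> b0 \is Num.real ->
  exists g s t, g \is Num.real /\ s \is Num.real /\ t \is Num.real /\
     b2 = -(g + s) /\ b1 = t + s * g /\ b0 = -(t * g).
Proof.
move=> R2 R1 R0; have [z Hz] := root3 b2 b1 b0.
case: (boolP (z \is Num.real)) => zR.
  exists z, (-(b2 + z)), (b1 + z * (b2 + z)); do 5 (try split).
  - done.
  - by realt.
  - by realt.
  - ring.
  - ring.
  - apply: (eq_of_sub _ Hz); ring.
have [s [t [sR tR Hq _]]] := conj_pair z zR.
have gR : -b2 - s \is Num.real by realt.
have AR : b1 - t - s * (-b2 - s) \is Num.real by realt.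
have BR : b0 + t * (-b2 - s) \is Num.real by realt.
have : (b1 - t - s * (-b2 - s)) * z + (b0 + t * (-b2 - s)) = 0.
  have -> : (b1 - t - s * (-b2 - s)) * z + (b0 + t * (-b2 - s)) =
     (z ^+ 3 + b2 * z ^+ 2 + b1 * z + b0) - (z ^+ 2 - s * z + t) * (z - (-b2 - s)) by ring.
  by rewrite Hz Hq mul0r subrr.
case/(lin_real_zero _ _ _ AR BR zR) => A0 B0.
exists (-b2 - s), s, t; do 5 (try split) => //.
- ring.
- apply: (eq_of_sub _ A0); ring.
- apply: (eq_of_sub _ B0); ring.
Qed.


Lemma fact4 a1 a2 a3 a4 : a1 \is Num.real -> a2 \is Num.real -> a3 \is Num.real ->
  a4 \is Num.real ->
  exists p q r w, p \is Num.real /\ q \is Num.real /\ r \is Num.real /\ w \is Num.real /\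
     a1 = p + r /\ a2 = q + w + p * r /\ a3 = p * w + r * q /\ a4 = q * w.
Proof.
move=> R1 R2 R3 R4; have [z Hz] := root4 a1 a2 a3 a4.
case: (boolP (z \is Num.real)) => zR.
  have [b2 [b1 [b0 [Q2 [Q1 [Q0 [E1 [E2 [E3 E4]]]]]]]]] : exists b2 b1 b0,
     b2 \is Num.real /\ b1 \is Num.real /\ b0 \is Num.real /\
     a1 = b2 - z /\ a2 = b1 - z * b2 /\ a3 = b0 - z * b1 /\ a4 = - (z * b0).
    exists (a1 + z), (a2 + z * (a1 + z)), (a3 + z * (a2 + z * (a1 + z))).
    do 6 (try split); try by realt.
    - ring.
    - ring.
    - ring.
    - apply: (eq_of_sub _ Hz); ring.
  subst a1 a2 a3 a4.
  have [g [s [t [gR [sR [tR [F2 [F1 F0]]]]]]]] := fact3 _ _ _ Q2 Q1 Q0.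
  subst b2 b1 b0.
  exists (-s), t, (-(z + g)), (z * g); do 7 (try split); try by realt.
  - ring.
  - ring.
  - ring.
  - ring.
have [s [t [sR tR Hq _]]] := conj_pair z zR.
have AR : a3 - (t * (a1 + s) - s * (a2 - t + s * (a1 + s))) \is Num.real by realt.
have BR : a4 - t * (a2 - t + s * (a1 + s)) \is Num.real by realt.
have : (a3 - (t * (a1 + s) - s * (a2 - t + s * (a1 + s)))) * z +
        (a4 - t * (a2 - t + s * (a1 + s))) = 0.
  have -> : (a3 - (t * (a1 + s) - s * (a2 - t + s * (a1 + s)))) * z +
        (a4 - t * (a2 - t + s * (a1 + s))) =
     (z ^+ 4 + a1 * z ^+ 3 + a2 * z ^+ 2 + a3 * z + a4)
      - (z ^+ 2 - s * z + t) * (z ^+ 2 + (a1 + s) * z + (a2 - t + s * (a1 + s))) by ring.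
  by rewrite Hz Hq mul0r subrr.
case/(lin_real_zero _ _ _ AR BR zR) => A0 B0.
exists (-s), t, (a1 + s), (a2 - t + s * (a1 + s)); do 7 (try split); try by realt.
- ring.
- ring.
- apply: (eq_of_sub _ A0); ring.
- apply: (eq_of_sub _ B0); ring.
Qed.


Lemma quad_stable p q z : p \is Num.real -> q \is Num.real -> 0 < p -> 0 < q ->
  z ^+ 2 + p * z + q = 0 -> 'Re z < 0.
Proof.
move=> pR qR p0 q0 Hz.
case: (boolP (z \is Num.real)) => zR.
  rewrite (Creal_ReP _ zR) real_ltNge ?rpred0 //; apply/negP => z0.
  have : 0 < z ^+ 2 + p * z + q.
    by apply: ltr_wpDl => //; apply: addr_ge0; [exact: exprn_ge0|exact: mulr_ge0 (ltW p0) z0].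
  by rewrite Hz ltxx.
have Hc : z^* ^+ 2 + p * z^* + q = 0.
  by rewrite -(conj_Creal pR) -(conj_Creal qR) -rmorphXn -rmorphM -!rmorphD Hz rmorph0.
have : (z - z^*) * (z + z^* + p) = 0.
  have -> : (z - z^*) * (z + z^* + p) = (z ^+ 2 + p * z + q) - (z^* ^+ 2 + p * z^* + q) by ring.
  by rewrite Hz Hc subrr.
move/eqP; rewrite mulf_eq0 subr_eq0 => /orP [zz|/eqP H].
  by move: zR; rewrite CrealE eq_sym zz.
have -> : 'Re z = - (p / 2%:R).
  rewrite ReE; have -> : z + z^* = - p by apply: (eq_of_sub _ H); ring.
  by rewrite mulNr.
by rewrite oppr_lt0 divr_gt0 // ltr0n.
Qed.

Lemma quad_unstable p q : p \is Num.real -> ~~ (0 < p) ->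
  exists z, z ^+ 2 + p * z + q = 0 /\ 0 <= 'Re z.
Proof.
move=> pR p0; have [z Hz] := root2 p q.
have Hz2 : (- p - z) ^+ 2 + p * (- p - z) + q = 0 by rewrite -Hz; ring.
have E : 'Re z + 'Re (- p - z) = - p.
  by rewrite -raddfD /= addrC subrK raddfN /= (Creal_ReP _ pR).
have ReR := Creal_Re z.
case: (real_leP (rpred0 _) ReR) => h; first by exists z.
exists (- p - z); split => //.
have -> : 'Re (- p - z) = - p - 'Re z by apply/eqP; rewrite eq_sym subr_eq [X in _ == X]addrC E.
rewrite subr_ge0; apply: ltW; apply: (lt_le_trans h).
by rewrite oppr_ge0; move: p0; rewrite -real_leNgt ?rpred0.
Qed.

Lemma pos_of_sum x y : x \is Num.real -> 0 < x + y -> 0 < x * y -> 0 < x.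
Proof.
move=> xR s0 m0; rewrite real_ltNge ?rpred0 //; apply/negP => x0.
have : x * y <= 0.
  apply: mulr_le0_ge0 => //; apply: ltW.
  by rewrite -(addKr x y); apply: ltr_wpDl => //; rewrite oppr_ge0.
by move=> h; have := lt_le_trans m0 h; rewrite ltxx.
Qed.

Lemma pos_q p q r w : q \is Num.real -> w \is Num.real -> 0 < p -> 0 < r ->
  0 < q * w -> 0 < p * w + r * q -> 0 < q.
Proof.
move=> qR wR p0 r0 m0 s0; rewrite real_ltNge ?rpred0 //; apply/negP => q0.
have w0 : w <= 0.
  rewrite real_leNgt ?rpred0 //; apply/negP => w0.
  by have := lt_le_trans m0 (mulr_le0_ge0 q0 (ltW w0)); rewrite ltxx.
have : p * w + r * q <= 0.
  rewrite -[0](addr0 0); apply: lerD.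
    exact: mulr_ge0_le0 (ltW p0) w0.
  exact: mulr_ge0_le0 (ltW r0) q0.
by move=> h; have := lt_le_trans s0 h; rewrite ltxx.
Qed.


Definition v2 a b : 'cV[C]_2 := \matrix_(i < 2, j < 1) (if i == 0 :> nat then a else b).

Lemma quadform d11 d12 d22 a b :
  ((v2 a b)^T *m mx2 d11 d12 d12 d22 *m v2 a b) 0 0 = a * a * d11 + 2 * a * b * d12 + b * b * d22.
Proof.
rewrite /v2 /mx2 !mxE !big_ord_recr big_ord0 /= !mxE !big_ord_recr !big_ord0 /= !mxE /=.
ring.
Qed.

Lemma posdef_v2 d11 d12 d22 a b : posdef (mx2 d11 d12 d12 d22) ->
  a \is Num.real -> b \is Num.real -> (a != 0) || (b != 0) ->
  0 < a * a * d11 + 2 * a * b * d12 + b * b * d22.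
Proof.
move=> H aR bR a0; rewrite -quadform; apply: H.
  by move=> i; rewrite mxE; case: ifP.
apply/negP => /eqP h; move: a0.
have := congr1 (fun M : 'cV[C]_2 => M 0 0) h; rewrite /v2 !mxE /= => ->.
by have := congr1 (fun M : 'cV[C]_2 => M 1 0) h; rewrite /v2 !mxE /= => ->; rewrite eqxx.
Qed.


End S.
Arguments posdef_v2 {C d11 d12 d22} a b.
Arguments fact4 {C}.
Arguments quad_unstable {C} p q.
Arguments quad_stable {C p q z}.
Arguments pos_of_sum {C x y}.
Arguments pos_q {C p q r w}.

Lemma detP (C : comNzRingType) (k11 k22 nu d11 d12 d22 l : C) :
 \det (l ^+ 2 *: 1%:M + l *: mx2 d11 d12 d12 d22
           + mx2 k11 0 0 k22 + mx2 0 nu (- nu) 0) =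
 l^+4 + (d11+d22) * l^+3 + (k11+k22+(d11*d22-d12^+2)) * l^+2 + (d11*k22+d22*k11) * l + (k11*k22+nu^+2).
Proof.
rewrite (expand_det_row _ ord0) !big_ord_recr big_ord0 /= add0r /cofactor !det_mx11.
rewrite !mxE /=. ring.
Qed.

Lemma idD (C : numFieldType) (k11 k22 nu d11 d12 d22 : C) : d11 + d22 != 0 ->
 (k11 - k22) ^+ 2 / 4
            - ((d11 - d22) ^+ 2 * (k11 - k22) ^+ 2
               - 4 * (k11 * d22 + k22 * d11) * (d11 * d22 - d12 ^+ 2) * (d11 + d22))
              / (4 * (d11 + d22) ^+ 2) - nu^+2 =
 ((d11+d22) * (k11+k22+(d11*d22-d12^+2)) * (d11*k22+d22*k11) - (d11*k22+d22*k11)^+2 - (d11+d22)^+2 * (k11*k22+nu^+2)) / (d11+d22)^+2.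
Proof. move=> h. field. by rewrite h. Qed.

Theorem mainTheorem4 (C : numClosedFieldType) (k11 k22 nu d11 d12 d22 : C)
  (hk11 : 0 < k11) (hk22 : 0 < k22) (hnu : nu \is Num.real)
  (hd11 : d11 \is Num.real) (hd12 : d12 \is Num.real) (hd22 : d22 \is Num.real)
  (hD : posdef (mx2 d11 d12 d12 d22)) :
  (forall lambda : C,
     \det (lambda ^+ 2 *: 1%:M + lambda *: mx2 d11 d12 d12 d22
           + mx2 k11 0 0 k22 + mx2 0 nu (- nu) 0) = 0 ->
     'Re lambda < 0)
  <->
  nu ^+ 2 < (k11 - k22) ^+ 2 / 4
            - ((d11 - d22) ^+ 2 * (k11 - k22) ^+ 2
               - 4 * (k11 * d22 + k22 * d11) * (d11 * d22 - d12 ^+ 2) * (d11 + d22))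
              / (4 * (d11 + d22) ^+ 2).
Proof.
have k11R := gtr0_real hk11; have k22R := gtr0_real hk22.
have d11p : 0 < d11.
  have := posdef_v2 1 0 hD (rpred1 _) (rpred0 _); rewrite oner_neq0 /= => /(_ isT).
  by have -> : 1 * 1 * d11 + 2 * 1 * 0 * d12 + 0 * 0 * d22 = d11 by ring.
have d22p : 0 < d22.
  have := posdef_v2 0 1 hD (rpred0 _) (rpred1 _); rewrite oner_neq0 orbT => /(_ isT).
  by have -> : 0 * 0 * d11 + 2 * 0 * 1 * d12 + 1 * 1 * d22 = d22 by ring.
have ep : 0 < d11 * d22 - d12 ^+ 2.
  have := posdef_v2 d12 (- d11) hD hd12 (_ : - d11 \is Num.real).
  rewrite oppr_eq0 (gt_eqF d11p) orbT => /(_ ltac:(by realt) isT).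
  have -> : d12 * d12 * d11 + 2 * d12 * - d11 * d12 + - d11 * - d11 * d22 =
     d11 * (d11 * d22 - d12 ^+ 2) by ring.
  by rewrite pmulr_rgt0.
have [p [q [r [w [pR [qR [rR [wR [E1 [E2 [E3 E4]]]]]]]]]]] :=
  fact4 (d11 + d22) (k11 + k22 + (d11 * d22 - d12 ^+ 2)) (d11 * k22 + d22 * k11)
    (k11 * k22 + nu ^+ 2) ltac:(by realt) ltac:(by realt) ltac:(by realt) ltac:(by realt).
have HD : forall l : C, \det (l ^+ 2 *: 1%:M + l *: mx2 d11 d12 d12 d22
           + mx2 k11 0 0 k22 + mx2 0 nu (- nu) 0) =
           (l ^+ 2 + p * l + q) * (l ^+ 2 + r * l + w).
  by move=> l; rewrite detP E1 E2 E3 E4; ring.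
have a1p : 0 < p + r by rewrite -E1 addr_gt0.
have a3p : 0 < p * w + r * q by rewrite -E3 addr_gt0 // mulr_gt0.
have a4p : 0 < q * w.
  by rewrite -E4; apply: ltr_wpDr; [exact: real_exprn_even_ge0|exact: mulr_gt0].
have Hcond : (nu ^+ 2 < (k11 - k22) ^+ 2 / 4
            - ((d11 - d22) ^+ 2 * (k11 - k22) ^+ 2
               - 4 * (k11 * d22 + k22 * d11) * (d11 * d22 - d12 ^+ 2) * (d11 + d22))
              / (4 * (d11 + d22) ^+ 2)) =
      (0 < p * r * ((q - w) ^+ 2 + (p + r) * (p * w + r * q))).
  rewrite -subr_gt0 idD ?(gt_eqF (addr_gt0 d11p d22p)) // pmulr_lgt0; last first.
    by rewrite invr_gt0 exprn_gt0 // addr_gt0.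
  by rewrite E1 E2 E3 E4; congr (0 < _); ring.
have BbR : (q - w) ^+ 2 + (p + r) * (p * w + r * q) \is Num.real by realt.
have Bbp : 0 < (q - w) ^+ 2 + (p + r) * (p * w + r * q).
  apply: ltr_wpDl; last exact: mulr_gt0.
  by apply: real_exprn_even_ge0 => //; realt.
rewrite Hcond; split.
  move=> H.
  have DR : p * r * ((q - w) ^+ 2 + (p + r) * (p * w + r * q)) \is Num.real by realt.
  rewrite real_ltNge ?rpred0 //; apply/negP => Hle.
  have Hpr : ~~ ((0 < p) && (0 < r)).
    apply/negP => /andP [p0 r0].
    by have := lt_le_trans (mulr_gt0 (mulr_gt0 p0 r0) Bbp) Hle; rewrite ltxx.
  case: (boolP (0 < p)) => p0.
    have r0 : ~~ (0 < r) by move: Hpr; rewrite p0.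
    have [z [Hz Rz]] := quad_unstable r w rR r0.
    have := H z; rewrite HD Hz mulr0 => /(_ erefl) Rz'.
    by have := le_lt_trans Rz Rz'; rewrite ltxx.
  have [z [Hz Rz]] := quad_unstable p q pR p0.
  have := H z; rewrite HD Hz mul0r => /(_ erefl) Rz'.
  by have := le_lt_trans Rz Rz'; rewrite ltxx.
move=> HP l.
rewrite HD => /eqP; rewrite mulf_eq0 => Hl.
have prp : 0 < p * r by rewrite -(pmulr_lgt0 _ Bbp).
have p0 : 0 < p := pos_of_sum pR a1p prp.
have r0 : 0 < r.
  by apply: (pos_of_sum (y:=p) rR); [rewrite addrC | rewrite mulrC].
have q0 : 0 < q := pos_q qR wR p0 r0 a4p a3p.
have w0 : 0 < w.
  by apply: (pos_q wR qR r0 p0); [rewrite mulrC | rewrite addrC].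
case/orP: Hl => /eqP Hl.
  exact: (quad_stable pR qR p0 q0 Hl).
exact: (quad_stable rR wR r0 w0 Hl).
Qed.
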